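(* Let $G=(\{f_i\},\{c_i\},\{X_i\},W)$ be a networked public goods game (as in the context). Suppose there exist $\boldsymbol{\gamma}\in\mathbb{R}_{++}^n$ and constants $c, L_0\ge 0$ such that (1) for every $i$ and every fixed $d\in[\underline{d}_i,\bar{d}_i]$, the function $x\mapsto\gamma_i\big(f_i(x+d)-c_i(x)\big)$ is $c$-concave on $X_i$; (2) $f_i'$ is $L_0$-Lipschitz for every $i$; (3) $c>L_0\,\sigma_{\max}(\Sigma)$, where $\Sigma=(\sigma_{ij})$ with $\sigma_{ij}=\sum_{k\ne i}\gamma_k|w_{ki}w_{kj}|$ and $\sigma_{\max}$ denotes the maximum singular value. Then $G$ has a unique (pure) Nash equilibrium.
   Context: There are $n$ players; player $i$ chooses effort $x_i\in X_i=[\underline{x}_i,\bar{x}_i]$, $X=\prod_iX_i$. $W=(w_{ij})$ is a real $n\times n$ matrix with $w_{ii}=1$. The gain of $i$ is $k_i=\sum_jw_{ij}x_j\in K_i=[\underline{k}_i,\bar{k}_i]$ (min and max over $X$). $f_i:K_i\to\mathbb{R}$ is twice differentiable, concave and strictly increasing; $c_i:X_i\to\mathbb{R}$ is twice differentiable, convex and strictly increasing; utility $u_i(\mathbf{x})=f_i(k_i)-c_i(x_i)$. A Nash equilibrium is $\mathbf{x}\in X$ with $u_i(x_i',\mathbf{x}_{-i})\le u_i(\mathbf{x})$ for all $i$, $x_i'\in X_i$. The externality gain bounds are $\underline{d}_i=\sum_{j\ne i}\big(\mathbf{1}\{w_{ij}>0\}w_{ij}\underline{x}_j+\mathbf{1}\{w_{ij}<0\}w_{ij}\bar{x}_j\big)$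 and $\bar{d}_i=\sum_{j\ne i}\big(\mathbf{1}\{w_{ij}>0\}w_{ij}\bar{x}_j+\mathbf{1}\{w_{ij}<0\}w_{ij}\underline{x}_j\big)$. A differentiable $g$ on a convex set is $c$-concave if $g(y)\le g(x)+\langle y-x,\nabla g(x)\rangle-\frac c2\|y-x\|^2$ for all $x,y$. *)

(* Defs.v *)
From HB Require Import structures.
From mathcomp Require Import all_boot all_order all_algebra.
From mathcomp Require Import reals.
Set Implicit Arguments. Unset Strict Implicit. Unset Printing Implicit Defensive.
Import Order.TTheory GRing.Theory Num.Theory.
Local Open Scope ring_scope.

Section Defs.
Variable R : realType.

Definition deriv_on (a b : R) (f df : R -> R) : Prop :=
  forall x, a <= x <= b -> forall e : R, 0 < e -> exists2 del : R, 0 < del &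
    forall y, a <= y <= b -> `|y - x| < del ->
      `|f y - f x - df x * (y - x)| <= e * `|y - x|.

Definition concave_on (a b : R) (f : R -> R) : Prop :=
  forall x y t, a <= x <= b -> a <= y <= b -> 0 <= t <= 1 ->
    t * f x + (1 - t) * f y <= f (t * x + (1 - t) * y).

Definition convex_on (a b : R) (f : R -> R) : Prop :=
  forall x y t, a <= x <= b -> a <= y <= b -> 0 <= t <= 1 ->
    f (t * x + (1 - t) * y) <= t * f x + (1 - t) * f y.

Definition strictly_increasing_on (a b : R) (f : R -> R) : Prop :=
  forall x y, a <= x -> x < y -> y <= b -> f x < f y.

Definition lipschitz_on (a b L : R) (g : R -> R) : Prop :=
  forall x y, a <= x <= b -> a <= y <= b -> `|g x - g y| <= L * `|x - y|.

Definition c_concave_on (a b c : R) (g : R -> R) : Prop :=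
  (exists dg, deriv_on a b g dg) /\
  forall dg, deriv_on a b g dg ->
    forall x y, a <= x <= b -> a <= y <= b ->
      g y <= g x + (y - x) * dg x - c / 2 * (y - x) ^+ 2.

Definition singular_value n (A : 'M[R]_n) (s : R) : Prop :=
  0 <= s /\ eigenvalue (A^T *m A) (s ^+ 2).

Variable n : nat.

Definition gain (W : 'M[R]_n) (x : 'I_n -> R) (i : 'I_n) : R :=
  \sum_(j < n) W i j * x j.

Definition dlo (W : 'M[R]_n) (xlo xhi : 'I_n -> R) (i : 'I_n) : R :=
  \sum_(j < n | j != i)
     (if 0 < W i j then W i j * xlo j else if W i j < 0 then W i j * xhi j else 0).

Definition dhi (W : 'M[R]_n) (xlo xhi : 'I_n -> R) (i : 'I_n) : R :=
  \sum_(j < n | j != i)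
     (if 0 < W i j then W i j * xhi j else if W i j < 0 then W i j * xlo j else 0).

(* K_i = [min_X k_i, max_X k_i]; since w_ii = 1 these are xlo_i + dlo_i, xhi_i + dhi_i *)
Definition klo W xlo xhi i := xlo i + dlo W xlo xhi i.
Definition khi W xlo xhi i := xhi i + dhi W xlo xhi i.

Definition utility (W : 'M[R]_n) (f cst : 'I_n -> R -> R) (x : 'I_n -> R) i : R :=
  f i (gain W x i) - cst i (x i).

Definition update (x : 'I_n -> R) (i : 'I_n) (v : R) : 'I_n -> R :=
  fun j => if j == i then v else x j.

Definition in_X (xlo xhi : 'I_n -> R) (x : 'I_n -> R) : Prop :=
  forall i, xlo i <= x i <= xhi i.

Definition nash_equilibrium W xlo xhi (f cst : 'I_n -> R -> R) (x : 'I_n -> R) : Prop :=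
  in_X xlo xhi x /\
  forall i v, xlo i <= v <= xhi i ->
    utility W f cst (update x i v) i <= utility W f cst x i.

Definition Sigma (W : 'M[R]_n) (gamma : 'I_n -> R) : 'M[R]_n :=
  \matrix_(i, j) \sum_(k < n | k != i) gamma k * `|W k i * W k j|.

End Defs.

(* Main.v *)
From HB Require Import structures.
From mathcomp Require Import all_boot all_order all_algebra.
From mathcomp Require Import reals.
From mathcomp Require Import boolp classical_sets topology normedtype derive.
From mathcomp Require Import ring lra.
Require Import Defs.
Import Order.TTheory GRing.Theory Num.Theory.
Import numFieldNormedType.Exports.
Local Open Scope ring_scope.
Set Implicit Arguments. Unset Strict Implicit.
Section Topo.
Local Open Scope classical_set_scope.
Variable R : realType.
Lemma cont_sum n (I : Type) (s : seq I) (F : I -> 'rV[R]_n -> R) :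
  (forall i, continuous (F i)) -> continuous (fun v => \sum_(i <- s) F i v).
Proof.
move=> HF; elim: s => [|a s IH].
  rewrite (_ : (fun v => _) = (fun _ => 0)); last by apply/funext => v; rewrite big_nil.
  exact: cst_continuous.
rewrite (_ : (fun v => _) = (fun v => F a v + \sum_(i <- s) F i v)); last first.
  by apply/funext => v; rewrite big_cons.
by move=> x; apply: continuousD; [exact: HF| exact: IH].
Qed.

Lemma cont_mul n (f g : 'rV[R]_n -> R) : continuous f -> continuous g ->
  continuous (fun v => f v * g v).
Proof. by move=> hf hg x; apply: continuousM; [exact: hf|exact: hg]. Qed.

Lemma cont_sub n (f g : 'rV[R]_n -> R) : continuous f -> continuous g ->
  continuous (fun v => f v - g v).
Proof. by move=> hf hg x; apply: continuousB; [exact: hf|exact: hg]. Qed.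

Lemma cont_coord n j : continuous (fun v : 'rV[R]_n => v ord0 j).
Proof. exact: coord_continuous. Qed.

Lemma box_compact n (a b : 'I_n -> R) :
  compact [set v : 'rV[R]_n | forall i, a i <= v ord0 i <= b i].
Proof.
have := @rV_compact R n (fun i => `[a i, b i]%classic) (fun i => @segment_compact R (a i) (b i)).
congr compact; apply/funext => v /=; apply/propext; split => H i; have := H i;
 by rewrite /= in_itv.
Qed.

Lemma min_on_box n (a b : 'I_n -> R) (f : 'rV[R]_n -> R) :
  (forall i, a i <= b i) -> continuous f ->
  exists2 c : 'rV[R]_n, (forall i, a i <= c ord0 i <= b i) &
     forall t : 'rV[R]_n, (forall i, a i <= t ord0 i <= b i) -> f c <= f t.
Proof.
move=> ab cf.
have ne : [set v : 'rV[R]_n | forall i, a i <= v ord0 i <= b i] !=set0.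
  by exists (\row_i a i) => i; rewrite mxE lexx ab.
have [c] := EVT_min_rV ne (@box_compact n a b) (continuous_subspaceT cf).
rewrite inE => Hc Hm; exists c => // t Ht; apply: Hm; rewrite inE; exact: Ht.
Qed.

Lemma sphere_max n (f : 'rV[R]_n.+1 -> R) :
  continuous f ->
  exists2 c : 'rV[R]_n.+1, \sum_i (c ord0 i)^+2 = 1 &
     forall t : 'rV[R]_n.+1, \sum_i (t ord0 i)^+2 = 1 -> f t <= f c.
Proof.
move=> cf.
pose S := [set v : 'rV[R]_n.+1 | \sum_i (v ord0 i)^+2 = 1].
have ne : S !=set0.
  exists (\row_i (if i == ord0 then 1 else 0)); rewrite /S /= (bigD1 ord0) //= mxE eqxx.
  rewrite big1 ?addr0 ?expr1n // => i /negbTE; rewrite mxE => ->; by rewrite expr0n.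
have cl : closed S.
  have cs : continuous (fun v : 'rV[R]_n.+1 => \sum_i (v ord0 i)^+2).
    apply: cont_sum => i; rewrite (_ : (fun v => _) = (fun v : 'rV[R]_n.+1 => v ord0 i * v ord0 i)).
      by apply: cont_mul; exact: cont_coord.
    by apply/funext => v; rewrite expr2.
  have c1 : closed [set x : R | x = 1] by [].
  have := (proj1 (continuous_closedP _)) cs _ c1.
  by congr closed.
have cS : compact S.
  apply: (subclosed_compact cl (@box_compact n.+1 (fun=> -1) (fun=> 1))) => v Sv i.
  rewrite -ler_norml -(expr_le1 (n:=2)) //= real_normK ?num_real //.
  rewrite -Sv (bigD1 i) //= lerDl; apply: sumr_ge0 => j _; exact: sqr_ge0.
have [c] := EVT_max_rV ne cS (continuous_subspaceT cf).
rewrite inE => Hc Hm; exists c => // t Ht; apply: Hm; rewrite inE; exact: Ht.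
Qed.
Lemma bridgeV n (f : 'rV[R]_n -> R) :
  (forall (x : 'rV[R]_n) e, 0 < e -> exists2 d, 0 < d & forall y : 'rV[R]_n, (forall j, `|x ord0 j - y ord0 j| < d) -> `|f x - f y| < e) ->
  continuous f.
Proof.
move=> H x A /nbhs_ballP [e e0 He].
have [d d0 Hd] := H x e e0.
exists (fun _ j => ball (x ord0 j) d).
  move=> i j; rewrite (ord1 i); exact: nbhsx_ballx.
move=> y /= Hy; apply: He; rewrite /ball /=.
apply: Hd => j; have := Hy ord0 j; by rewrite /ball /=.
Qed.

Lemma bridgeR (f : R -> R) :
  (forall x e, 0 < e -> exists2 d, 0 < d & forall y, `|x - y| < d -> `|f x - f y| < e) ->
  continuous f.
Proof.
move=> H x; apply/cvgrPdist_lt => e e0.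
have [d d0 Hd] := H x e e0.
apply/nbhs_normP; exists d => //= y /=; exact: Hd.
Qed.

Lemma EVT_maxR (f : R -> R) (a b : R) : a <= b -> continuous f ->
  exists2 c, a <= c <= b & forall t, a <= t <= b -> f t <= f c.
Proof.
move=> ab cf; have [c] := EVT_max ab (continuous_subspaceT cf).
rewrite in_itv /= => Hc Hm; exists c => // t Ht; apply: Hm; by rewrite in_itv /=.
Qed.
End Topo.
Definition nsq (R : realType) n (u : 'I_n -> R) : R := \sum_i u i ^+ 2.
Definition dot (R : realType) n (u v : 'I_n -> R) : R := \sum_i u i * v i.
Definition nrm (R : realType) n (u : 'I_n -> R) : R := Num.sqrt (nsq u).

Lemma nsq_ge0 (R : realType) n (u : 'I_n -> R) : 0 <= nsq u.
Proof. by apply: sumr_ge0 => i _; exact: sqr_ge0. Qed.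

Lemma nsq_eq0 (R : realType) n (u : 'I_n -> R) : nsq u = 0 -> forall i, u i = 0.
Proof.
move=> H i; apply/eqP; rewrite -sqrf_eq0; apply/eqP.
by move/psumr_eq0P: H => -> // j _; exact: sqr_ge0.
Qed.

Lemma nrmK (R : realType) n (u : 'I_n -> R) : nrm u ^+ 2 = nsq u.
Proof. by rewrite sqr_sqrtr // nsq_ge0. Qed.

Lemma nrm_ge0 (R : realType) n (u : 'I_n -> R) : 0 <= nrm u.
Proof. exact: sqrtr_ge0. Qed.

Lemma nsq_lin (R : realType) n (a b : 'I_n -> R) (s t : R) :
  \sum_i (s * a i + t * b i) ^+ 2 = s ^+ 2 * nsq a + 2 * s * t * dot a b + t ^+ 2 * nsq b.
Proof.
rewrite /nsq /dot !mulr_sumr -!big_split /=; apply: eq_bigr => i _; ring.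
Qed.

Lemma cauchy_schwarz (R : realType) n (u v : 'I_n -> R) : dot u v <= nrm u * nrm v.
Proof.
have [a0|a0] := eqVneq (nsq u) 0.
  rewrite /dot big1 ?mulr_ge0 ?nrm_ge0 // => i _; by rewrite (nsq_eq0 a0) mul0r.
have [b0|b0] := eqVneq (nsq v) 0.
  rewrite /dot big1 ?mulr_ge0 ?nrm_ge0 // => i _; by rewrite (nsq_eq0 b0) mulr0.
have ap : 0 < nrm u by rewrite sqrtr_gt0 lt_neqAle eq_sym a0 nsq_ge0.
have bp : 0 < nrm v by rewrite sqrtr_gt0 lt_neqAle eq_sym b0 nsq_ge0.
have H := nsq_lin u v (nrm v) (- nrm u).
have H0 : 0 <= \sum_i (nrm v * u i + - nrm u * v i) ^+ 2 by apply: sumr_ge0 => i _; exact: sqr_ge0.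
rewrite H -!nrmK in H0.
have : 0 < nrm u * nrm v by exact: mulr_gt0.
move: H0; set A := nrm u; set B := nrm v; set D := dot u v => H0 H1.
have : (D - A * B) * (A * B) <= 0 by nra.
by rewrite pmulr_lle0 // subr_le0.
Qed.


Definition Sv (R : realType) n (S : 'M[R]_n) (u : 'I_n -> R) : 'I_n -> R :=
  fun k => \sum_j S k j * u j.

Lemma nsq_scale (R : realType) n (t : R) (a : 'I_n -> R) :
  nsq (fun i => t * a i) = t ^+ 2 * nsq a.
Proof. by rewrite /nsq mulr_sumr; apply: eq_bigr => i _; rewrite exprMn. Qed.

Lemma Sv_scale (R : realType) n (S : 'M[R]_n) (t : R) (a : 'I_n -> R) :
  Sv S (fun i => t * a i) = fun k => t * Sv S a k.
Proof.
by apply/funext => k; rewrite /Sv mulr_sumr; apply: eq_bigr => i _; rewrite mulrCA.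
Qed.

Lemma Sv_lin (R : realType) n (S : 'M[R]_n) (t : R) (a b : 'I_n -> R) :
  Sv S (fun i => 1 * a i + t * b i) = fun k => 1 * Sv S a k + t * Sv S b k.
Proof.
apply/funext => k; rewrite /Sv mul1r mulr_sumr -big_split; apply: eq_bigr => i _ /=.
ring.
Qed.

Lemma quad_zero (R : realType) (b d : R) : 0 <= d ->
  (forall t, 0 <= t * (2 * b) + t ^+ 2 * d) -> b = 0.
Proof.
move=> d0 H; apply/eqP; apply/negPn/negP => bn.
have := H (- b / (d + 1)).
have d1 : 0 < d + 1 by lra.
set t := - b / (d + 1).
have ht : t * (d + 1) = - b by rewrite /t mulfVK // gt_eqF.
have b2 : 0 < b ^+ 2 by rewrite lt_def sqr_ge0 sqrf_eq0 bn.
nra.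
Qed.

Lemma spectral (R : realType) n (S : 'M[R]_n.+1) :
  exists s, singular_value S s /\ forall u, nsq (Sv S u) <= s ^+ 2 * nsq u.
Proof.
pose Q := fun v : 'rV[R]_n.+1 => nsq (Sv S (fun i => v ord0 i)).
have cQ : continuous Q.
  rewrite (_ : Q = fun v => \sum_k (\sum_j S k j * v ord0 j) * (\sum_j S k j * v ord0 j)).
    apply: cont_sum => k; apply: cont_mul; apply: cont_sum => j;
      (apply: cont_mul; [exact: cst_continuous | exact: cont_coord]).
  by apply/funext => v; rewrite /Q /nsq /Sv; apply: eq_bigr => k _; rewrite expr2.
have [c c1 cmax] := sphere_max cQ.
pose uf := fun i => c ord0 i.
pose lam := Q c.
have nuf : nsq uf = 1 by [].
have C1 : forall v, nsq (Sv S v) <= lam * nsq v.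
  move=> v; have [v0|v0] := eqVneq (nsq v) 0.
    rewrite v0 mulr0 (_ : Sv S v = fun _ => 0).
      by rewrite /nsq big1 // => i _; rewrite expr0n.
    by apply/funext => k; rewrite /Sv big1 // => j _; rewrite (nsq_eq0 v0) mulr0.
  have np : 0 < nrm v by rewrite sqrtr_gt0 lt_def v0 nsq_ge0.
  pose t := (nrm v)^-1.
  have H := cmax (\row_i (t * v i)).
  have E : (fun i => (\row_i (t * v i)) ord0 i) = (fun i => t * v i).
    by apply/funext => i; rewrite mxE.
  have hs : \sum_i ((\row_i (t * v i)) ord0 i) ^+ 2 = 1.
    under eq_bigr do rewrite mxE.
    change (nsq (fun i => t * v i) = 1); rewrite nsq_scale -nrmK.
    by rewrite /t -exprMn mulVf ?expr1n // gt_eqF.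
  have := H hs; rewrite /Q E Sv_scale nsq_scale => H2.
  have := ler_wpM2r (sqr_ge0 (nrm v)) H2.
  by rewrite mulrAC -exprMn /t mulVf ?gt_eqF // expr1n mul1r nrmK.
have C2 : forall w, lam * dot uf w = dot (Sv S uf) (Sv S w).
  move=> w; apply/eqP; rewrite -subr_eq0; apply/eqP.
  apply: (@quad_zero _ _ (lam * nsq w - nsq (Sv S w))); first by rewrite subr_ge0.
  move=> t; have := C1 (fun i => 1 * uf i + t * w i).
  rewrite Sv_lin /nsq !nsq_lin -/(nsq _) -/(nsq (Sv S uf)) -/(nsq (Sv S w)) -/(nsq w) nuf.
  rewrite -subr_ge0 => H; apply: le_trans H _; rewrite le_eqVlt; apply/orP; left; apply/eqP.
  rewrite /lam /Q -/uf; ring.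
have lam0 : 0 <= lam by exact: nsq_ge0.
exists (Num.sqrt lam); split; last by move=> u; rewrite sqr_sqrtr.
split; first exact: sqrtr_ge0.
rewrite sqr_sqrtr //; apply/eigenvalueP; exists c; last first.
  apply/eqP => c0; move: c1; rewrite c0 big1 => [|i _]; last by rewrite mxE expr0n.
  by move/eqP; rewrite eq_sym oner_eq0.
apply/rowP => i; rewrite !mxE.
have := C2 (fun j => (j == i)%:R).
rewrite /dot (bigD1 i) //= eqxx mulr1 big1 ?addr0 => [->|j /negbTE ->]; last by rewrite mulr0.
rewrite (_ : Sv S (fun j => (j == i)%:R) = fun k => S k i); last first.
  apply/funext => k; rewrite /Sv (bigD1 i) //= eqxx mulr1 big1 ?addr0 // => j /negbTE ->.
  by rewrite mulr0.
under eq_bigr do rewrite !mxE mulr_sumr.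
rewrite exchange_big /=; apply: eq_bigr => k _; rewrite /Sv mulr_suml; apply: eq_bigr => j _.
by rewrite !mxE /uf mulrA [c _ _ * _]mulrC.
Qed.


Definition clamp (R : realType) (a b y : R) : R := Num.min (Num.max y a) b.

Lemma clamp_in (R : realType) (a b y : R) : a <= b -> a <= clamp a b y <= b.
Proof.
move=> ab; rewrite /clamp; apply/andP; split.
  by rewrite le_min ab le_max lexx orbT.
by rewrite ge_min lexx orbT.
Qed.

Lemma clamp_id (R : realType) (a b y : R) : a <= y <= b -> clamp a b y = y.
Proof.
move=> /andP[ay yb]; rewrite /clamp.
have -> : Num.max y a = y by apply/max_idPl.
by apply/min_idPl.
Qed.

Lemma max_lip (R : realType) (p q a : R) : `|Num.max p a - Num.max q a| <= `|p - q|.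
Proof.
have h3 : p - q <= `|p - q| := ler_norm _.
have h4 : -(p - q) <= `|p - q| by rewrite -normrN ler_norm.
rewrite !maxEle; have [h1|h1] := leP p a; have [h2|h2] := leP q a;
  rewrite ler_norml; apply/andP; split; lra.
Qed.

Lemma min_lip (R : realType) (p q a : R) : `|Num.min p a - Num.min q a| <= `|p - q|.
Proof.
have h3 : p - q <= `|p - q| := ler_norm _.
have h4 : -(p - q) <= `|p - q| by rewrite -normrN ler_norm.
rewrite !minEle; have [h1|h1] := leP p a; have [h2|h2] := leP q a;
  rewrite ler_norml; apply/andP; split; lra.
Qed.

Lemma clamp_lip (R : realType) (a b x y : R) :
  `|clamp a b x - clamp a b y| <= `|x - y|.
Proof. exact: le_trans (min_lip _ _ _) (max_lip _ _ _). Qed.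

Lemma comp_le_nrm (R : realType) N (a : 'I_N -> R) i : `|a i| <= nrm a.
Proof.
rewrite -sqrtr_sqr ler_sqrt ?nsq_ge0 // /nsq (bigD1 i) //= lerDl.
by apply: sumr_ge0 => j _; exact: sqr_ge0.
Qed.

Lemma nrm_small (R : realType) N (a : 'I_N -> R) e : 0 < e ->
  (forall j, `|a j| < e / (N%:R + 1)) -> nrm a < e.
Proof.
move=> e0 H; set t := e / (N%:R + 1).
have k0 : 0 <= (N%:R : R) by exact: ler0n.
have k1 : 0 < (N%:R : R) + 1 by lra.
have te : t * (N%:R + 1) = e by rewrite /t mulfVK // gt_eqF.
have t0 : 0 < t by rewrite /t divr_gt0.
have : nsq a <= \sum_(j < N) t ^+ 2.
  apply: ler_sum => j _; rewrite -real_normK ?num_real //.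
  have h1 := H j; have h2 := normr_ge0 (a j).
  rewrite -subr_ge0 (_ : t ^+ 2 - _ = (t - `|a j|) * (t + `|a j|)); last by ring.
  apply: mulr_ge0; rewrite -/t in h1; lra.
rewrite sumr_const card_ord -mulr_natr => h.
have h2 : nsq a < e ^+ 2 by apply: le_lt_trans h _; rewrite -te; nra.
rewrite /nrm -(ger0_norm (ltW e0)) -sqrtr_sqr ltr_sqrt //; exact: exprn_gt0.
Qed.

Lemma fixed_point (R : realType) N (lo hi : 'I_N -> R) (T : ('I_N -> R) -> ('I_N -> R)) :
 (forall i, lo i <= hi i) ->
 (forall x, in_X lo hi x -> in_X lo hi (T x)) ->
 (forall x y, in_X lo hi x -> in_X lo hi y ->
    nrm (fun i => T x i - T y i) <= nrm (fun i => x i - y i)) ->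
 (forall x y, in_X lo hi x -> in_X lo hi y -> 0 < nrm (fun i => x i - y i) ->
    nrm (fun i => T x i - T y i) < nrm (fun i => x i - y i)) ->
 exists x, in_X lo hi x /\ T x = x.
Proof.
move=> lohi TX Tle Tlt.
pose cl := fun (v : 'rV[R]_N) i => clamp (lo i) (hi i) (v ord0 i).
have clX : forall v, in_X lo hi (cl v) by move=> v i; exact: clamp_in.
pose phi := fun v => nsq (fun i => T (cl v) i - cl v i).
have ccl : forall i, continuous (fun v => cl v i).
  move=> i; apply: bridgeV => x e e0; exists e => // y Hy.
  exact: le_lt_trans (clamp_lip _ _ _ _) (Hy i).
have cT : forall i, continuous (fun v => T (cl v) i).
  move=> i; apply: bridgeV => x e e0; exists (e / (N%:R + 1)).
    by apply: divr_gt0 => //; rewrite ltr_wpDl ?ler0n.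
  move=> y Hy; apply: le_lt_trans (comp_le_nrm (fun i => T (cl x) i - T (cl y) i) i) _.
  apply: le_lt_trans (Tle _ _ (clX x) (clX y)) _.
  apply: nrm_small => // j; exact: le_lt_trans (clamp_lip _ _ _ _) (Hy j).
have cphi : continuous phi.
  rewrite (_ : phi = fun v => \sum_i (T (cl v) i - cl v i) * (T (cl v) i - cl v i)).
    by apply: cont_sum => i; apply: cont_mul; apply: cont_sub.
  by apply/funext => v; rewrite /phi /nsq; apply: eq_bigr => i _; rewrite expr2.
have [c0 c0X c0min] := min_on_box lohi cphi.
pose x0 := fun i => c0 ord0 i.
have x0X : in_X lo hi x0 by move=> i; exact: c0X.
have clc : cl c0 = x0 by apply/funext => i; rewrite /cl clamp_id //; exact: c0X.
exists x0; split => //.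
have [z0|zp] := eqVneq (nsq (fun i => T x0 i - x0 i)) 0.
  by apply/funext => i; apply/eqP; rewrite -subr_eq0; apply/eqP; exact: (nsq_eq0 z0).
exfalso.
set y := T x0.
have yX : in_X lo hi y := TX _ x0X.
pose v' := \row_i y i.
have clv : cl v' = y by apply/funext => i; rewrite /cl mxE clamp_id //; exact: yX.
have := c0min v'; rewrite {1}/phi clc /phi clv.
have hm : (forall i, lo i <= v' ord0 i <= hi i) by move=> i; rewrite mxE; exact: yX.
move=> /(_ hm).
have np : 0 < nrm (fun i => y i - x0 i).
  by rewrite sqrtr_gt0 lt_def zp nsq_ge0.
have := Tlt _ _ yX x0X np; rewrite -/y.
rewrite -!nrmK.
have := nrm_ge0 (fun i => T y i - y i); nra.
Qed.


Lemma deriv_comb (R : realType) (ka kb a b d g : R) (f df cs dcs : R -> R) :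
  ka <= a + d -> b + d <= kb ->
  deriv_on ka kb f df -> deriv_on a b cs dcs ->
  deriv_on a b (fun x => g * (f (x + d) - cs x)) (fun x => g * (df (x + d) - dcs x)).
Proof.
move=> hka hkb Hf Hc x xab e e0; have /andP[ax xb] := xab.
have g1 : 0 < `|g| + 1 by rewrite ltr_wpDl.
pose e1 := e / (2 * (`|g| + 1)).
have e1p : 0 < e1 by rewrite /e1 divr_gt0 // mulr_gt0.
have he1 : e1 * (2 * (`|g| + 1)) = e by rewrite /e1 mulfVK // gt_eqF // mulr_gt0.
have xdK : ka <= x + d <= kb by apply/andP; split; lra.
have [d1 d1p H1] := Hf (x + d) xdK e1 e1p.
have [d2 d2p H2] := Hc x xab e1 e1p.
exists (Num.min d1 d2); first by rewrite lt_min d1p d2p.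
move=> y yab; have /andP[ay yb] := yab; rewrite lt_min => /andP[yd1 yd2].
have ydK : ka <= y + d <= kb by apply/andP; split; lra.
have E : y + d - (x + d) = y - x by ring.
have := H1 (y + d) ydK; rewrite E => /(_ yd1) h1.
have h2 := H2 y yab yd2.
rewrite (_ : _ - _ - _ = g * ((f (y + d) - f (x + d) - df (x + d) * (y - x)) -
                               (cs y - cs x - dcs x * (y - x)))); last by ring.
rewrite normrM; apply: le_trans (ler_wpM2l (normr_ge0 g) (ler_normB _ _)) _.
have r0 := normr_ge0 (y - x); have g0 := normr_ge0 g.
have : `|g| * (`|f (y + d) - f (x + d) - df (x + d) * (y - x)| + `|cs y - cs x - dcs x * (y - x)|)
   <= `|g| * (2 * e1 * `|y - x|).
  by apply: ler_wpM2l => //; lra.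
move=> h; apply: le_trans h _; rewrite -he1; nra.
Qed.

Lemma deriv_quad (R : realType) (a b x0 : R) (h dh : R -> R) :
  deriv_on a b h dh ->
  deriv_on a b (fun y => h y - (y - x0) ^+ 2 / 2) (fun y => dh y - (y - x0)).
Proof.
move=> Hh x xab e e0.
have e2 : 0 < e / 2 by rewrite divr_gt0.
have [d1 d1p H1] := Hh x xab (e / 2) e2.
exists (Num.min d1 (e / 2)); first by rewrite lt_min d1p e2.
move=> y yab; rewrite lt_min => /andP[yd1 yd2].
have h1 := H1 y yab yd1.
rewrite (_ : h y - (y - x0) ^+ 2 / 2 - (h x - (x - x0) ^+ 2 / 2) - (dh x - (x - x0)) * (y - x) = (h y - h x - dh x * (y - x)) - (y - x) ^+ 2 / 2); last by field.
apply: le_trans (ler_normB _ _) _.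
rewrite (_ : `|(y - x) ^+ 2 / 2| = `|y - x| ^+ 2 / 2); last first.
  by rewrite normrM normrX (ger0_norm (x := 2^-1)) // invr_ge0 ler0n.
have r0 := normr_ge0 (y - x).
set r := `|y - x| in h1 yd2 r0 *.
set A := `|_| in h1 *.
nra.
Qed.


Lemma foc (R : realType) (a b z : R) (h dh : R -> R) :
  deriv_on a b h dh -> a <= z <= b -> (forall y, a <= y <= b -> h y <= h z) ->
  forall v, a <= v <= b -> dh z * (v - z) <= 0.
Proof.
move=> Hh zab zmax v vab; rewrite leNgt; apply/negP => p0.
have vz : v - z != 0 by apply: contraTneq p0 => ->; rewrite mulr0 ltxx.
have dz : dh z != 0 by apply: contraTneq p0 => ->; rewrite mul0r ltxx.
set p := dh z * (v - z) in p0 *.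
have rp : 0 < `|v - z| by rewrite normr_gt0.
have ep : 0 < `|dh z| / 2 by rewrite divr_gt0 // normr_gt0.
have [del delp H] := Hh z zab _ ep.
pose t := Num.min 1 (del / (2 * `|v - z|)).
have t0 : 0 < t by rewrite lt_min ltr01 divr_gt0 // mulr_gt0.
have t1 : t <= 1 by rewrite ge_min lexx.
have t2 : t * (2 * `|v - z|) <= del.
  have : t <= del / (2 * `|v - z|) by rewrite ge_min lexx orbT.
  by rewrite ler_pdivlMr // mulr_gt0.
pose y := z + t * (v - z).
have yab : a <= y <= b.
  move: zab vab => /andP[az zb] /andP[av vb]; apply/andP; rewrite /y; split; nra.
have hyz : `|y - z| = t * `|v - z| by rewrite /y addrAC subrr add0r normrM gtr0_norm.
have yd : `|y - z| < del by rewrite hyz; nra.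
have := H y yab yd; rewrite hyz.
have pn : p = `|dh z| * `|v - z| by rewrite -normrM gtr0_norm.
rewrite (_ : dh z * (y - z) = t * p); last by rewrite /y /p addrAC subrr add0r mulrCA.
have := zmax y yab.
move=> hyzle hn; move: (ler_normlW hn) => hn2.
have : - (`|dh z| / 2 * (t * `|v - z|)) <= h y - h z - t * p.
  by move: hn; rewrite ler_norml => /andP[].
rewrite pn; nra.
Qed.

Lemma cont_clamp (R : realType) (a b : R) (h dh : R -> R) : a <= b ->
  deriv_on a b h dh -> continuous (fun y => h (clamp a b y)).
Proof.
move=> ab Hh; apply: bridgeR => x e e0.
set p := clamp a b x.
have pab : a <= p <= b := clamp_in x ab.
have g1 : 0 < `|dh p| + 1 by rewrite ltr_wpDl.
have [d0 d0p H] := Hh p pab 1 ltr01.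
exists (Num.min d0 (e / (`|dh p| + 1))); first by rewrite lt_min d0p divr_gt0.
move=> y; rewrite lt_min => /andP[yd0 yde].
set q := clamp a b y.
have qab : a <= q <= b := clamp_in y ab.
have pq : `|p - q| <= `|x - y| := clamp_lip a b x y.
have h1 := H q qab.
have qp : `|q - p| < d0 by rewrite distrC; exact: le_lt_trans pq yd0.
have {h1} h1 := h1 qp; rewrite mul1r in h1.
have h2 : `|h q - h p| <= (`|dh p| + 1) * `|q - p|.
  rewrite mulrDl mul1r.
  have := ler_normD (h q - h p - dh p * (q - p)) (dh p * (q - p)).
  rewrite subrK normrM; lra.
rewrite distrC; apply: le_lt_trans h2 _.
have : `|q - p| < e / (`|dh p| + 1) by rewrite distrC; exact: le_lt_trans pq yde.
by rewrite ltr_pdivlMr // mulrC.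
Qed.

Lemma prox1 (R : realType) (a b x0 : R) (g dg : R -> R) : a <= b ->
  deriv_on a b g dg ->
  exists2 z, a <= z <= b & forall v, a <= v <= b -> (dg z - (z - x0)) * (v - z) <= 0.
Proof.
move=> ab Hg.
have Hh := deriv_quad x0 Hg.
have [c cab cmax] := EVT_maxR ab (cont_clamp ab Hh).
exists c => //; apply: (foc Hh cab) => y yab.
by have := cmax y yab; rewrite !clamp_id.
Qed.


Definition dsum (R : realType) n (W : 'M[R]_n) (x : 'I_n -> R) (i : 'I_n) : R :=
  \sum_(j < n | j != i) W i j * x j.

Lemma gain_upd (R : realType) n (W : 'M[R]_n) x i v : W i i = 1 ->
  gain W (update x i v) i = v + dsum W x i.
Proof.
move=> Wii; rewrite /gain (bigD1 i) //= /update eqxx Wii mul1r; congr (_ + _).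
by apply: eq_bigr => j /negbTE ->.
Qed.

Lemma gain_self (R : realType) n (W : 'M[R]_n) x i : W i i = 1 ->
  gain W x i = x i + dsum W x i.
Proof. by move=> Wii; rewrite /gain (bigD1 i) //= Wii mul1r. Qed.

Lemma dsum_range (R : realType) n (W : 'M[R]_n) xlo xhi x i : in_X xlo xhi x ->
  dlo W xlo xhi i <= dsum W x i <= dhi W xlo xhi i.
Proof.
move=> xX; apply/andP; split; apply: ler_sum => j _; have /andP[l h] := xX j;
  have [Wp|Wn|W0] := ltgtP 0 (W i j).
- by apply: ler_wpM2l => //; exact: ltW.
- by apply: ler_wnM2l => //; exact: ltW.
- by rewrite -W0 mul0r.
- by apply: ler_wpM2l => //; exact: ltW.
- by apply: ler_wnM2l => //; exact: ltW.
- by rewrite -W0 mul0r.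
Qed.

Definition Gd (R : realType) n (gamma : 'I_n -> R) (df dcst : 'I_n -> R -> R) i (z d : R) : R :=
  gamma i * (df i (z + d) - dcst i z).

Definition Prox (R : realType) n (W : 'M[R]_n) (xlo xhi gamma : 'I_n -> R)
  (df dcst : 'I_n -> R -> R) (x z : 'I_n -> R) : Prop :=
  in_X xlo xhi z /\ forall i v, xlo i <= v <= xhi i ->
    (Gd gamma df dcst i (z i) (dsum W x i) - (z i - x i)) * (v - z i) <= 0.

Lemma g_deriv (R : realType) n (W : 'M[R]_n) (xlo xhi gamma : 'I_n -> R)
  (f df cst dcst : 'I_n -> R -> R) i d :
  deriv_on (klo W xlo xhi i) (khi W xlo xhi i) (f i) (df i) ->
  deriv_on (xlo i) (xhi i) (cst i) (dcst i) ->
  dlo W xlo xhi i <= d <= dhi W xlo xhi i ->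
  deriv_on (xlo i) (xhi i) (fun z => gamma i * (f i (z + d) - cst i z))
    (fun z => Gd gamma df dcst i z d).
Proof.
move=> Hf Hc /andP[d1 d2]; rewrite /Gd; apply: (deriv_comb (gamma i) _ _ Hf Hc).
  by rewrite /klo lerD2l.
by rewrite /khi lerD2l.
Qed.

Lemma utility_upd (R : realType) n (W : 'M[R]_n) (f cst : 'I_n -> R -> R) x i v :
  W i i = 1 -> utility W f cst (update x i v) i = f i (v + dsum W x i) - cst i v.
Proof. by move=> Wii; rewrite /utility gain_upd // /update eqxx. Qed.

Lemma utility_self (R : realType) n (W : 'M[R]_n) (f cst : 'I_n -> R -> R) x i :
  W i i = 1 -> utility W f cst x i = f i (x i + dsum W x i) - cst i (x i).
Proof. by move=> Wii; rewrite /utility gain_self. Qed.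

Lemma NE_prox (R : realType) n (W : 'M[R]_n) (xlo xhi gamma : 'I_n -> R)
  (f df cst dcst : 'I_n -> R -> R) x :
  (forall i, W i i = 1) ->
  (forall i, deriv_on (klo W xlo xhi i) (khi W xlo xhi i) (f i) (df i)) ->
  (forall i, deriv_on (xlo i) (xhi i) (cst i) (dcst i)) ->
  (forall i, 0 < gamma i) ->
  nash_equilibrium W xlo xhi f cst x -> Prox W xlo xhi gamma df dcst x x.
Proof.
move=> Wii Hf Hc gp [xX NE]; split => // i v vX.
rewrite subrr subr0.
have Hg := g_deriv gamma (Hf i) (Hc i) (@dsum_range _ _ W xlo xhi x i xX).
apply: (foc Hg (xX i)) => // y yX.
have := NE i y yX; rewrite utility_upd // utility_self // => h.
by apply: ler_wpM2l => //; exact: ltW.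
Qed.

Lemma prox_NE (R : realType) n (W : 'M[R]_n) (xlo xhi gamma : 'I_n -> R)
  (f df cst dcst : 'I_n -> R -> R) (c : R) x :
  (forall i, W i i = 1) ->
  (forall i, deriv_on (klo W xlo xhi i) (khi W xlo xhi i) (f i) (df i)) ->
  (forall i, deriv_on (xlo i) (xhi i) (cst i) (dcst i)) ->
  (forall i, 0 < gamma i) -> 0 <= c ->
  (forall i d, dlo W xlo xhi i <= d <= dhi W xlo xhi i ->
     c_concave_on (xlo i) (xhi i) c
       (fun x => gamma i * (f i (x + d) - cst i x))) ->
  Prox W xlo xhi gamma df dcst x x -> nash_equilibrium W xlo xhi f cst x.
Proof.
move=> Wii Hf Hc gp c0 Hcc [xX P]; split => // i v vX.
have dr := @dsum_range _ _ W xlo xhi x i xX.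
have Hg := g_deriv gamma (Hf i) (Hc i) dr.
have [_ H] := Hcc i _ dr.
have := H _ Hg (x i) v (xX i) vX.
have := P i v vX; rewrite subrr subr0 => h1 h2.
rewrite utility_upd // utility_self //.
have : gamma i * (f i (v + dsum W x i) - cst i v) <= gamma i * (f i (x i + dsum W x i) - cst i (x i)).
  apply: le_trans h2 _.
  have : 0 <= c / 2 * (v - x i) ^+ 2 by apply: mulr_ge0; [apply: divr_ge0 | exact: sqr_ge0].
  rewrite mulrC in h1; lra.
by rewrite ler_pM2l.
Qed.

Lemma strong_mono (R : realType) n (W : 'M[R]_n) (xlo xhi gamma : 'I_n -> R)
  (f df cst dcst : 'I_n -> R -> R) (c : R) i d z z' :
  deriv_on (klo W xlo xhi i) (khi W xlo xhi i) (f i) (df i) ->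
  deriv_on (xlo i) (xhi i) (cst i) (dcst i) ->
  dlo W xlo xhi i <= d <= dhi W xlo xhi i ->
  c_concave_on (xlo i) (xhi i) c (fun x => gamma i * (f i (x + d) - cst i x)) ->
  xlo i <= z <= xhi i -> xlo i <= z' <= xhi i ->
  (Gd gamma df dcst i z d - Gd gamma df dcst i z' d) * (z - z') <= - c * (z - z') ^+ 2.
Proof.
move=> Hf Hc dr [_ H] zX z'X.
have Hg := g_deriv gamma Hf Hc dr.
have h1 := H _ Hg z z' zX z'X.
have h2 := H _ Hg z' z z'X zX.
set G1 := Gd _ _ _ _ z d in h1 h2 *.
set G2 := Gd _ _ _ _ z' d in h1 h2 *.
rewrite (_ : (z' - z) ^+ 2 = (z - z') ^+ 2) in h1; last by ring.
lra.
Qed.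

Lemma dsum_diff (R : realType) n (W : 'M[R]_n) x y i :
  `|dsum W x i - dsum W y i| <= \sum_(j < n | j != i) `|W i j| * `|x j - y j|.
Proof.
rewrite /dsum -sumrB; apply: le_trans (ler_norm_sum _ _ _) _.
by apply: ler_sum => j _; rewrite -mulrBr normrM.
Qed.

Lemma pair_ineq (R : realType) n (W : 'M[R]_n) (xlo xhi gamma : 'I_n -> R)
  (f df cst dcst : 'I_n -> R -> R) (c L0 : R) x y z z' i :
  deriv_on (klo W xlo xhi i) (khi W xlo xhi i) (f i) (df i) ->
  deriv_on (xlo i) (xhi i) (cst i) (dcst i) ->
  (forall d, dlo W xlo xhi i <= d <= dhi W xlo xhi i ->
     c_concave_on (xlo i) (xhi i) c (fun x => gamma i * (f i (x + d) - cst i x))) ->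
  lipschitz_on (klo W xlo xhi i) (khi W xlo xhi i) L0 (df i) ->
  0 < gamma i -> 0 <= L0 ->
  in_X xlo xhi x -> in_X xlo xhi y ->
  Prox W xlo xhi gamma df dcst x z -> Prox W xlo xhi gamma df dcst y z' ->
  (1 + c) * (z i - z' i) ^+ 2 <= (x i - y i) * (z i - z' i) +
    gamma i * L0 * `|z i - z' i| * \sum_(j < n | j != i) `|W i j| * `|x j - y j|.
Proof.
move=> Hf Hc Hcc Lip gp L0p xX yX [zX Pz] [z'X Pz'].
have dr := @dsum_range _ _ W xlo xhi x i xX.
have dr' := @dsum_range _ _ W xlo xhi y i yX.
have H1 := Pz i (z' i) (z'X i).
have H2 := Pz' i (z i) (zX i).
have SM := strong_mono Hf Hc dr (Hcc _ dr) (zX i) (z'X i).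
set d := dsum W x i in dr H1 SM *.
set d' := dsum W y i in dr' H2 *.
set S := \sum_(j < n | j != i) _.
have hS : `|d - d'| <= S by exact: dsum_diff.
set e := z i - z' i.
set B := `|Gd gamma df dcst i (z' i) d - Gd gamma df dcst i (z' i) d'|.
have hA : (Gd gamma df dcst i (z' i) d - Gd gamma df dcst i (z' i) d') * e <= B * `|e|.
  by rewrite /B -normrM ler_norm.
have hB : B <= gamma i * L0 * S.
  rewrite /B /Gd (_ : forall u v w : R, gamma i * (u - w) - gamma i * (v - w) = gamma i * (u - v));
    last by move=> *; ring.
  rewrite normrM (gtr0_norm gp) -mulrA; apply: ler_wpM2l; first exact: ltW.
  have K1 : klo W xlo xhi i <= z' i + d <= khi W xlo xhi i.
    move: (z'X i) dr => /andP[a1 a2] /andP[b1 b2]; rewrite /klo /khi; apply/andP; split; lra.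
  have K2 : klo W xlo xhi i <= z' i + d' <= khi W xlo xhi i.
    move: (z'X i) dr' => /andP[a1 a2] /andP[b1 b2]; rewrite /klo /khi; apply/andP; split; lra.
  apply: le_trans (Lip _ _ K1 K2) _.
  rewrite (_ : z' i + d - (z' i + d') = d - d'); last by ring.
  exact: ler_wpM2l.
have hC : B * `|e| <= gamma i * L0 * S * `|e| by apply: ler_wpM2r.
rewrite /e in hA hC *.
lra.
Qed.

Lemma Sigma_ge0 (R : realType) n (W : 'M[R]_n) (gamma : 'I_n -> R) j i :
  (forall k, 0 < gamma k) -> 0 <= Sigma W gamma j i.
Proof.
move=> gp; rewrite /Sigma mxE; apply: sumr_ge0 => k _.
by apply: mulr_ge0; [exact: ltW | exact: normr_ge0].
Qed.

Lemma Sigma_bound (R : realType) n (W : 'M[R]_n) (gamma : 'I_n -> R) j i :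
  (forall k, W k k = 1) -> (forall k, 0 < gamma k) -> i != j ->
  gamma i * `|W i j| <= Sigma W gamma j i.
Proof.
move=> Wii gp ij; rewrite /Sigma mxE (bigD1 i) //= Wii mulr1 lerDl.
apply: sumr_ge0 => k _; by apply: mulr_ge0; [exact: ltW | exact: normr_ge0].
Qed.

Lemma contraction (R : realType) n (W : 'M[R]_n) (xlo xhi gamma : 'I_n -> R)
  (f df cst dcst : 'I_n -> R -> R) (c L0 s : R) x y z z' :
  (forall i, W i i = 1) ->
  (forall i, deriv_on (klo W xlo xhi i) (khi W xlo xhi i) (f i) (df i)) ->
  (forall i, deriv_on (xlo i) (xhi i) (cst i) (dcst i)) ->
  (forall i, 0 < gamma i) -> 0 <= c -> 0 <= L0 ->
  (forall i d, dlo W xlo xhi i <= d <= dhi W xlo xhi i ->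
     c_concave_on (xlo i) (xhi i) c
       (fun x => gamma i * (f i (x + d) - cst i x))) ->
  (forall i, lipschitz_on (klo W xlo xhi i) (khi W xlo xhi i) L0 (df i)) ->
  0 <= s -> (forall u, nsq (Sv (Sigma W gamma) u) <= s ^+ 2 * nsq u) ->
  in_X xlo xhi x -> in_X xlo xhi y ->
  Prox W xlo xhi gamma df dcst x z -> Prox W xlo xhi gamma df dcst y z' ->
  (1 + c) * nrm (fun i => z i - z' i) <= (1 + L0 * s) * nrm (fun i => x i - y i).
Proof.
move=> Wii Hf Hc gp c0 L0p Hcc Lip s0 Hs xX yX Pz Pz'.
pose e := fun i => z i - z' i.
pose dl := fun i => x i - y i.
pose ae := fun i => `|e i|.
pose ad := fun i => `|dl i|.
pose Sg := Sigma W gamma.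
pose Si := fun i => \sum_(j < n | j != i) `|W i j| * `|x j - y j|.
have st1 : (1 + c) * nsq e <= dot dl e + L0 * \sum_i (gamma i * `|e i| * Si i).
  have PI : forall i, (1 + c) * e i ^+ 2 <= dl i * e i + gamma i * L0 * `|e i| * Si i.
    move=> i; exact: (pair_ineq (Hf i) (Hc i) (Hcc i) (Lip i) (gp i) L0p xX yX Pz Pz').
  rewrite /nsq mulr_sumr.
  apply: le_trans (ler_sum _ (fun i _ => PI i)) _.
  rewrite big_split /= /dot mulr_sumr le_eqVlt; apply/orP; left; apply/eqP; congr (_ + _).
  by apply: eq_bigr => i _; rewrite /e /Si; ring.
have st2 : \sum_i (gamma i * `|e i| * Si i) <= dot ad (Sv Sg ae).
  apply: le_trans (_ : \sum_i ae i * \sum_j Sg j i * ad j <= _).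
    apply: ler_sum => i _; rewrite -mulrA mulrCA; apply: ler_wpM2l; first exact: normr_ge0.
    rewrite /Si mulr_sumr (bigD1 i (P := predT)) //= -[X in X <= _]add0r.
    apply: lerD; first by apply: mulr_ge0; [exact: Sigma_ge0 | exact: normr_ge0].
    apply: ler_sum => j ji; rewrite mulrA; apply: ler_wpM2r; first exact: normr_ge0.
    by apply: Sigma_bound => //; rewrite eq_sym.
  rewrite /dot /Sv le_eqVlt; apply/orP; left; apply/eqP.
  under eq_bigr do rewrite mulr_sumr.
  rewrite exchange_big /=; apply: eq_bigr => j _; rewrite mulr_sumr; apply: eq_bigr => i _.
  by rewrite /ad /ae; ring.
have nad : nrm ad = nrm dl.
  by rewrite /nrm /nsq; congr Num.sqrt; apply: eq_bigr => i _; rewrite /ad real_normK ?num_real.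
have nae : nrm ae = nrm e.
  by rewrite /nrm /nsq; congr Num.sqrt; apply: eq_bigr => i _; rewrite /ae real_normK ?num_real.
have st3 : dot ad (Sv Sg ae) <= nrm dl * (s * nrm e).
  apply: le_trans (cauchy_schwarz _ _) _; rewrite nad; apply: ler_wpM2l; first exact: nrm_ge0.
  rewrite -nae /nrm -(ger0_norm s0) -sqrtr_sqr -sqrtrM ?sqr_ge0 // ler_sqrt.
    exact: Hs.
  by apply: mulr_ge0; [exact: sqr_ge0 | exact: nsq_ge0].
have st4 := cauchy_schwarz dl e.
have E0 := nrm_ge0 e; have D0 := nrm_ge0 dl.
have key : (1 + c) * nrm e ^+ 2 <= (1 + L0 * s) * nrm dl * nrm e.
  rewrite nrmK; apply: le_trans st1 _.
  have := ler_wpM2l L0p (le_trans st2 st3); lra.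
have [E|E] := eqVneq (nrm e) 0.
  rewrite E mulr0; apply: mulr_ge0 => //; apply: addr_ge0 => //; exact: mulr_ge0.
have Ep : 0 < nrm e by rewrite lt_def E E0.
by rewrite -(ler_pM2r Ep) -mulrA -expr2.
Qed.

Unset Implicit Arguments.

Theorem theorem3p6 (R : realType) (n : nat) (W : 'M[R]_n)
  (xlo xhi : 'I_n -> R)
  (f df cst dcst : 'I_n -> R -> R)
  (gamma : 'I_n -> R) (c L0 : R) :
  (forall i, W i i = 1) ->
  (forall i, xlo i <= xhi i) ->
  (* f_i : K_i -> R twice differentiable, concave, strictly increasing *)
  (forall i, deriv_on (klo W xlo xhi i) (khi W xlo xhi i) (f i) (df i)) ->
  (forall i, exists d2f, deriv_on (klo W xlo xhi i) (khi W xlo xhi i) (df i) d2f) ->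
  (forall i, concave_on (klo W xlo xhi i) (khi W xlo xhi i) (f i)) ->
  (forall i, strictly_increasing_on (klo W xlo xhi i) (khi W xlo xhi i) (f i)) ->
  (* c_i : X_i -> R twice differentiable, convex, strictly increasing *)
  (forall i, deriv_on (xlo i) (xhi i) (cst i) (dcst i)) ->
  (forall i, exists d2c, deriv_on (xlo i) (xhi i) (dcst i) d2c) ->
  (forall i, convex_on (xlo i) (xhi i) (cst i)) ->
  (forall i, strictly_increasing_on (xlo i) (xhi i) (cst i)) ->
  (* assumptions of the theorem *)
  (forall i, 0 < gamma i) -> 0 <= c -> 0 <= L0 ->
  (forall i d, dlo W xlo xhi i <= d <= dhi W xlo xhi i ->
     c_concave_on (xlo i) (xhi i) c
       (fun x => gamma i * (f i (x + d) - cst i x))) ->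
  (forall i, lipschitz_on (klo W xlo xhi i) (khi W xlo xhi i) L0 (df i)) ->
  (forall s, singular_value (Sigma W gamma) s -> L0 * s < c) ->
  exists! x : 'I_n -> R, nash_equilibrium W xlo xhi f cst x.
Proof.
move=> Wii lohi Hf Hf2 Hconc Hinc Hc Hc2 Hconv Hcinc gp c0 L0p Hcc Lip Hsv.
destruct n as [|n].
  exists xlo; split; first by split => [i|i]; case: i.
  by move=> y _; apply/funext => -[].
have [s [svs Hs]] := spectral (Sigma W gamma).
have sc := Hsv s svs.
have s0 : 0 <= s by case: svs.
have Ls0 : 0 <= L0 * s by exact: mulr_ge0.
have CT := fun x y z z' => @contraction _ _ W xlo xhi gamma f df cst dcst c L0 s x y z z'
  Wii Hf Hc gp c0 L0p Hcc Lip s0 Hs.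
have Hex : forall x, exists z, in_X xlo xhi x -> Prox W xlo xhi gamma df dcst x z.
  move=> x; case: (pselect (in_X xlo xhi x)) => xX; last by exists x.
  have : forall i, exists zi, xlo i <= zi <= xhi i /\ forall v, xlo i <= v <= xhi i ->
      (Gd gamma df dcst i zi (dsum W x i) - (zi - x i)) * (v - zi) <= 0.
    move=> i.
    have Hg := g_deriv gamma (Hf i) (Hc i) (@dsum_range _ _ W xlo xhi x i xX).
    have [zi ziX Hzi] := prox1 (x i) (lohi i) Hg.
    by exists zi; split.
  move=> /choice [zf Hzf]; exists zf => _; split => [i|i v vX]; first exact: (Hzf i).1.
  exact: (Hzf i).2.
have [T HT] := choice Hex.
have TX : forall x, in_X xlo xhi x -> in_X xlo xhi (T x) by move=> x xX; exact: (HT x xX).1.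
have TC : forall x y, in_X xlo xhi x -> in_X xlo xhi y ->
    (1 + c) * nrm (fun i => T x i - T y i) <= (1 + L0 * s) * nrm (fun i => x i - y i).
  by move=> x y xX yX; apply: CT => //; [exact: HT | exact: HT].
have [xs [xsX Txs]] : exists x, in_X xlo xhi x /\ T x = x.
  apply: (fixed_point lohi TX).
    move=> x y xX yX; have := TC x y xX yX.
    have := nrm_ge0 (fun i => x i - y i); have := nrm_ge0 (fun i => T x i - T y i).
    move=> h1 h2 h3.
    have h4 : (1 + L0 * s) * nrm (fun i => x i - y i) <= (1 + c) * nrm (fun i => x i - y i).
      by apply: ler_wpM2r => //; lra.
    by rewrite -(@ler_pM2l _ (1 + c)) ?(le_trans h3 h4) //; lra.
  move=> x y xX yX np; have := TC x y xX yX.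
  have h4 : (1 + L0 * s) * nrm (fun i => x i - y i) < (1 + c) * nrm (fun i => x i - y i).
    by rewrite ltr_pM2r //; lra.
  move=> h3; by rewrite -(@ltr_pM2l _ (1 + c)) ?(le_lt_trans h3 h4) //; lra.
have Pxs : Prox W xlo xhi gamma df dcst xs xs by rewrite -{2}Txs; exact: HT.
have NExs := prox_NE Wii Hf Hc gp c0 Hcc Pxs.
exists xs; split => // y NEy.
have Py : Prox W xlo xhi gamma df dcst y y := NE_prox Wii Hf Hc gp NEy.
have yX : in_X xlo xhi y by case: NEy.
have := CT _ _ _ _ xsX yX Pxs Py.
set N := nrm _ => h.
have N0 : N = 0.
  have : 0 <= N by exact: nrm_ge0.
  have : (c - L0 * s) * N <= 0 by lra.
  rewrite pmulr_rle0 ?subr_gt0 //; lra.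
apply/funext => i; apply/eqP; rewrite -subr_eq0; apply/eqP.
have : nsq (fun i => xs i - y i) = 0 by rewrite -nrmK -/N N0 expr0n.
by move/nsq_eq0; apply.
Qed.
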